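(* Let $F_3:\mathbf{Sets}\times\mathbf{Sets}\to\mathbf{Sets}\times\mathbf{Sets}$ be the functor $F_3(V,E)=(1,(V\uplus E)\times(V\uplus E))$, and let $\mathcal{M}$ be the class of morphisms $\langle f_V,f_E\rangle$ of $F_3$-coalgebras with $f_V$ and $f_E$ both injective. Then $(\mathbf{Coalg}_{F_3},\mathcal{M})$ is an $\mathcal{M}$-adhesive category.
   Context: $1$ is a one-element set, $\uplus$ disjoint union. An $F_3$-coalgebra is an object $(V,E)$ of $\mathbf{Sets}\times\mathbf{Sets}$ with a morphism $(V,E)\to F_3(V,E)$, i.e. essentially a function $c:E\to(V\uplus E)\times(V\uplus E)$ (graphs with nested directed edges); morphisms are pairs $(f_V,f_E)$ commuting with the structure maps. A pair $(\mathbf{C},\mathcal{M})$ with $\mathcal{M}$ a class of monomorphisms is $\mathcal{M}$-adhesive if $\mathcal{M}$ contains identities and is closed under composition, pushouts and pullbacks along $\mathcal{M}$-morphisms exist and $\mathcal{M}$ is stable under them, and pushouts along $\mathcal{M}$-morphisms are vertical weak van Kampen squares (for any commutative cube with such a pushout as bottom, pullbacks as back faces and all vertical morphisms in $\mathcal{M}$, the top face is a pushout iff the front faces are pullbacks). *)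

(* Defs.v *)
Set Implicit Arguments.
Unset Strict Implicit.

Record Category := {
  Ob :> Type;
  Hom : Ob -> Ob -> Type;
  heq : forall A B, Hom A B -> Hom A B -> Prop;
  idm : forall A, Hom A A;
  comp : forall A B C, Hom B C -> Hom A B -> Hom A C;
  heq_refl : forall A B (f : Hom A B), heq f f;
  heq_sym : forall A B (f g : Hom A B), heq f g -> heq g f;
  heq_trans : forall A B (f g h : Hom A B), heq f g -> heq g h -> heq f h;
  comp_heq : forall A B C (f f' : Hom B C) (g g' : Hom A B),
      heq f f' -> heq g g' -> heq (comp f g) (comp f' g');
  comp_assoc : forall A B C D (f : Hom C D) (g : Hom B C) (h : Hom A B),
      heq (comp f (comp g h)) (comp (comp f g) h);
  comp_idl : forall A B (f : Hom A B), heq (comp (idm B) f) f;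
  comp_idr : forall A B (f : Hom A B), heq (comp f (idm A)) f
}.

Arguments Hom {c} _ _.
Arguments heq {c A B} _ _.
Arguments idm {c} _.
Arguments comp {c A B C} _ _.

Section CatDefs.
Variable C : Category.

Definition is_mono (A B : C) (m : Hom A B) : Prop :=
  forall (X : C) (g h : Hom X A), heq (comp m g) (comp m h) -> heq g h.

Definition is_pushout (A B C' D : C) (m : Hom A B) (f : Hom A C')
    (n : Hom B D) (g : Hom C' D) : Prop :=
  heq (comp n m) (comp g f) /\
  forall (X : C) (h : Hom B X) (k : Hom C' X),
    heq (comp h m) (comp k f) ->
    exists u : Hom D X,
      heq (comp u n) h /\ heq (comp u g) k /\
      forall u' : Hom D X, heq (comp u' n) h -> heq (comp u' g) k -> heq u' u.

Definition is_pullback (P B C' D : C) (p1 : Hom P B) (p2 : Hom P C')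
    (f : Hom B D) (g : Hom C' D) : Prop :=
  heq (comp f p1) (comp g p2) /\
  forall (X : C) (h : Hom X B) (k : Hom X C'),
    heq (comp f h) (comp g k) ->
    exists u : Hom X P,
      heq (comp p1 u) h /\ heq (comp p2 u) k /\
      forall u' : Hom X P, heq (comp p1 u') h -> heq (comp p2 u') k -> heq u' u.

Definition MorClass := forall A B : C, Hom A B -> Prop.

(** Pushouts along M-morphisms are vertical weak van Kampen squares:
    bottom face the pushout (A,B,C',D) with m in M; top face
    (A',B',C',D') commutative; vertical morphisms a,b,c,d in M;
    back faces pullbacks, front faces commutative. *)
Definition vertical_weak_VK (M : MorClass) : Prop :=
  forall (A B C' D : C) (m : Hom A B) (f : Hom A C') (n : Hom B D) (g : Hom C' D),
    M _ _ m -> is_pushout m f n g ->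
  forall (A' B' C'' D' : C) (m' : Hom A' B') (f' : Hom A' C'')
         (n' : Hom B' D') (g' : Hom C'' D')
         (a : Hom A' A) (b : Hom B' B) (c : Hom C'' C') (d : Hom D' D),
    heq (comp n' m') (comp g' f') ->
    M _ _ a -> M _ _ b -> M _ _ c -> M _ _ d ->
    is_pullback a m' m b ->
    is_pullback a f' f c ->
    heq (comp n b) (comp d n') ->
    heq (comp g c) (comp d g') ->
    (is_pushout m' f' n' g' <->
       (is_pullback b n' n d /\ is_pullback c g' g d)).

Definition M_adhesive (M : MorClass) : Prop :=
  (forall (A B : C) (m : Hom A B), M _ _ m -> is_mono m) /\
  (forall A : C, M _ _ (idm A)) /\
  (forall (A B D : C) (f : Hom A B) (g : Hom B D), M _ _ f -> M _ _ g -> M _ _ (comp g f)) /\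
  (forall (A B C' : C) (m : Hom A B) (f : Hom A C'), M _ _ m ->
     exists (D : C) (n : Hom B D) (g : Hom C' D), is_pushout m f n g) /\
  (forall (A B C' D : C) (m : Hom A B) (f : Hom A C') (n : Hom B D) (g : Hom C' D),
     M _ _ m -> is_pushout m f n g -> M _ _ g) /\
  (forall (B C' D : C) (f : Hom B D) (g : Hom C' D), M _ _ g ->
     exists (P : C) (p1 : Hom P B) (p2 : Hom P C'), is_pullback p1 p2 f g) /\
  (forall (P B C' D : C) (p1 : Hom P B) (p2 : Hom P C') (f : Hom B D) (g : Hom C' D),
     M _ _ g -> is_pullback p1 p2 f g -> M _ _ p1) /\
  vertical_weak_VK M.

End CatDefs.

(** * F3-coalgebras:  F3(V,E) = (1, (V ⊎ E) × (V ⊎ E)).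
    A coalgebra (V,E) -> F3(V,E) is a pair (V -> 1, E -> (V⊎E)×(V⊎E));
    the first component is the unique map to 1, so we record only c. *)
Record F3coalg := mkF3 {
  cV : Type;
  cE : Type;
  cstr : cE -> (cV + cE) * (cV + cE)
}.
Arguments cstr : clear implicits.

Definition smap (A A' B B' : Type) (f : A -> A') (g : B -> B') (x : A + B) : A' + B' :=
  match x with inl a => inl (f a) | inr b => inr (g b) end.

Definition F3map (A A' B B' : Type) (f : A -> A') (g : B -> B')
    (p : (A + B) * (A + B)) : (A' + B') * (A' + B') :=
  (smap f g (fst p), smap f g (snd p)).

Record F3hom (X Y : F3coalg) := {
  hV : cV X -> cV Y;
  hE : cE X -> cE Y;
  hcomm : forall e, cstr Y (hE e) = F3map hV hE (cstr X e)
}.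

Definition F3heq (X Y : F3coalg) (f g : F3hom X Y) : Prop :=
  (forall v, hV f v = hV g v) /\ (forall e, hE f e = hE g e).

Definition F3id (X : F3coalg) : F3hom X X.
Proof.
  refine {| hV := fun v => v; hE := fun e => e; hcomm := _ |}.
  intro e; unfold F3map; destruct (cstr X e) as [s t];
  destruct s, t; reflexivity.
Defined.

Definition F3comp (X Y Z : F3coalg) (f : F3hom Y Z) (g : F3hom X Y) : F3hom X Z.
Proof.
  refine {| hV := fun v => hV f (hV g v); hE := fun e => hE f (hE g e); hcomm := _ |}.
  intro e. rewrite (hcomm f), (hcomm g). unfold F3map.
  destruct (cstr X e) as [s t]; destruct s, t; reflexivity.
Defined.

Definition F3Coalg : Category.
Proof.
  refine {| Ob := F3coalg; Hom := F3hom; heq := F3heq;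
            idm := F3id; comp := F3comp |};
  unfold F3heq; simpl; firstorder; try congruence.
Defined.

Definition M_inj : MorClass F3Coalg :=
  fun X Y (f : F3hom X Y) =>
    (forall x y, hV f x = hV f y -> x = y) /\
    (forall x y, hE f x = hE f y -> x = y).

(* Main.v *)
Require Import Defs.
From Stdlib Require Import Classical ClassicalEpsilon ProofIrrelevance.

Definition SPB {P B C D : Type} (p1 : P -> B) (p2 : P -> C) (f : B -> D) (g : C -> D) : Prop :=
  (forall x, f (p1 x) = g (p2 x)) /\
  (forall b c, f b = g c -> exists x, p1 x = b /\ p2 x = c) /\
  (forall x y, p1 x = p1 y -> p2 x = p2 y -> x = y).

Definition SPO {A B C D : Type} (m : A -> B) (f : A -> C) (n : B -> D) (g : C -> D) : Prop :=
  (forall x, n (m x) = g (f x)) /\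
  (forall x y, g x = g y -> x = y) /\
  (forall d, (exists c, g c = d) \/ (exists b, n b = d)) /\
  (forall b c, n b = g c -> exists a, m a = b) /\
  (forall b b', n b = n b' -> (forall a, m a <> b) -> b = b').

Definition Inj {A B : Type} (f : A -> B) := forall x y, f x = f y -> x = y.

Lemma set_VK {A B C D A' B' C' D' : Type}
  (m : A -> B) (f : A -> C) (n : B -> D) (g : C -> D)
  (m' : A' -> B') (f' : A' -> C') (n' : B' -> D') (g' : C' -> D')
  (a : A' -> A) (b : B' -> B) (c : C' -> C) (d : D' -> D) :
  SPO m f n g -> Inj b -> Inj c -> Inj d ->
  (forall x, n' (m' x) = g' (f' x)) ->
  (forall x, m (a x) = b (m' x)) ->
  (forall a0 b', m a0 = b b' -> exists x, a x = a0 /\ m' x = b') ->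
  (forall x, f (a x) = c (f' x)) ->
  (forall a0 c', f a0 = c c' -> exists x, a x = a0 /\ f' x = c') ->
  (forall y, n (b y) = d (n' y)) ->
  (forall z, g (c z) = d (g' z)) ->
  (SPO m' f' n' g' <-> SPB b n' n d /\ SPB c g' g d).
Proof.
  intros [P1 [P2 [P3 [P4 P5]]]] Ib Ic Id Top Bm Em Bf Ef Fr Fl.
  split.
  - intros [_ [_ [Q3 _]]]. split.
    + split; [exact Fr|split; [|intros x y H _; apply Ib, H]].
      intros b0 d' H.
      destruct (Q3 d') as [[c'' Hc]|[b' Hb]]; subst d'.
      * rewrite <- Fl in H. destruct (P4 _ _ H) as [a0 Ha0]. subst b0.
        rewrite P1 in H. apply P2 in H.
        destruct (Ef _ _ H) as [a2 [Ha2 Hf2]].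
        exists (m' a2). split.
        -- rewrite <- Bm, Ha2; reflexivity.
        -- rewrite Top, Hf2; reflexivity.
      * destruct (classic (exists a0, m a0 = b0)) as [[a0 Ha0]|Hn].
        -- subst b0. rewrite <- Fr in H.
           assert (H' : n (b b') = g (f a0)) by (rewrite <- H; apply P1).
           destruct (P4 _ _ H') as [a1 Ha1].
           destruct (Em _ _ Ha1) as [a' [Ha' Hm']].
           assert (Hfa : f a1 = f a0) by (apply P2; rewrite <- P1, Ha1; exact H').
           assert (Hc : f a0 = c (f' a')) by (rewrite <- Hfa, <- Ha'; apply Bf).
           destruct (Ef _ _ Hc) as [a2 [Ha2 Hf2]].
           exists (m' a2). split.
           ++ rewrite <- Bm, Ha2; reflexivity.
           ++ rewrite Top, Hf2, <- Top, Hm'; reflexivity.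
        -- exists b'. split; [|reflexivity]. symmetry.
           apply P5; [rewrite H, Fr; reflexivity|].
           intros a0 E. apply Hn. exists a0. exact E.
    + split; [exact Fl|split; [|intros x y H _; apply Ic, H]].
      intros c0 d' H.
      destruct (Q3 d') as [[c'' Hc]|[b' Hb]]; subst d'.
      * exists c''. split; [|reflexivity]. apply P2. rewrite Fl. symmetry. exact H.
      * assert (H' : n (b b') = g c0) by (rewrite Fr; symmetry; exact H).
        destruct (P4 _ _ H') as [a1 Ha1].
        destruct (Em _ _ Ha1) as [a' [Ha' Hm']].
        exists (f' a'). split.
        -- rewrite <- Bf, Ha'. apply P2. rewrite <- P1, Ha1. exact H'.
        -- rewrite <- Top, Hm'. reflexivity.
  - intros [[_ [Er _]] [_ [El _]]].
    split; [exact Top|]. split; [|split; [|split]].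
    + intros x y H. apply Ic, P2. rewrite !Fl, H. reflexivity.
    + intros d'. destruct (P3 (d d')) as [[c0 Hc]|[b0 Hb]].
      * destruct (El _ _ Hc) as [z [_ Hz]]. left; eauto.
      * destruct (Er _ _ Hb) as [z [_ Hz]]. right; eauto.
    + intros b' c'' H.
      assert (H' : n (b b') = g (c c'')) by (rewrite Fr, Fl, H; reflexivity).
      destruct (P4 _ _ H') as [a0 Ha0].
      destruct (Em _ _ Ha0) as [x [_ Hx]]. eauto.
    + intros b1 b2 H Hn. apply Ib. apply P5.
      * rewrite !Fr, H; reflexivity.
      * intros a0 Ha0. destruct (Em _ _ Ha0) as [x [_ Hx]]. exact (Hn x Hx).
Qed.

Lemma SPO_transfer {A B C D D0 : Type} (m : A -> B) (f : A -> C) (n : B -> D) (g : C -> D)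
  (n0 : B -> D0) (g0 : C -> D0) (u : D -> D0) (v : D0 -> D) :
  SPO m f n0 g0 -> (forall x, n (m x) = g (f x)) ->
  (forall b, u (n b) = n0 b) -> (forall c, u (g c) = g0 c) ->
  (forall b, v (n0 b) = n b) -> (forall c, v (g0 c) = g c) ->
  (forall d, v (u d) = d) -> SPO m f n g.
Proof.
  intros [P1 [P2 [P3 [P4 P5]]]] C1 Un Ug Vn Vg VU.
  split; [exact C1|split;[|split;[|split]]].
  - intros x y H. apply P2. rewrite <- !Ug, H. reflexivity.
  - intros d0. destruct (P3 (u d0)) as [[c Hc]|[b Hb]].
    + left. exists c. rewrite <- Vg, Hc. apply VU.
    + right. exists b. rewrite <- Vn, Hb. apply VU.
  - intros b c H. apply (P4 b c). rewrite <- Un, <- Ug, H. reflexivity.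
  - intros b b' H Hn. apply P5; auto. rewrite <- !Un, H. reflexivity.
Qed.

Lemma SPB_transfer {P P0 B C D : Type} (p1 : P -> B) (p2 : P -> C) (f : B -> D) (g : C -> D)
  (q1 : P0 -> B) (q2 : P0 -> C) (u : P0 -> P) (v : P -> P0) :
  SPB q1 q2 f g -> (forall x, f (p1 x) = g (p2 x)) ->
  (forall x, p1 (u x) = q1 x) -> (forall x, p2 (u x) = q2 x) ->
  (forall x, q1 (v x) = p1 x) -> (forall x, q2 (v x) = p2 x) ->
  (forall x, u (v x) = x) -> SPB p1 p2 f g.
Proof.
  intros [Q1 [Q2 Q3]] C1 U1 U2 V1 V2 UV.
  split; [exact C1|split].
  - intros b c H. destruct (Q2 b c H) as [x [H1 H2]]. exists (u x). rewrite U1, U2; auto.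
  - intros x y H1 H2. rewrite <- (UV x), <- (UV y). f_equal. apply Q3; rewrite ?V1, ?V2; assumption.
Qed.

Lemma SPB_sig {B C D : Type} (f : B -> D) (g : C -> D) :
  SPB (fun p : {p : B * C | f (fst p) = g (snd p)} => fst (proj1_sig p))
      (fun p => snd (proj1_sig p)) f g.
Proof.
  split; [intros [p H]; exact H|split].
  - intros b c H. exists (exist _ (b,c) H). auto.
  - intros [[b c] H] [[b' c'] H'] E1 E2; simpl in *. subst. f_equal. apply proof_irrelevance.
Qed.

Definition pon {A B C : Type} (m : A -> B) (f : A -> C) (b : B) : C + {b : B | forall a, m a <> b} :=
  match excluded_middle_informative (exists a, m a = b) with
  | left H => inl (f (proj1_sig (constructive_indefinite_description _ H)))
  | right H => inr (exist _ b (fun a E => H (ex_intro _ a E)))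
  end.

Lemma pon_m {A B C : Type} (m : A -> B) (f : A -> C) : Inj m -> forall a, pon m f (m a) = inl (f a).
Proof.
  intros Im a. unfold pon. destruct (excluded_middle_informative _) as [H|H].
  - destruct (constructive_indefinite_description _ H) as [a' Ha']. simpl. rewrite (Im _ _ Ha'). reflexivity.
  - exfalso; apply H; eauto.
Qed.

Lemma pon_not {A B C : Type} (m : A -> B) (f : A -> C) b (p : forall a, m a <> b) :
  pon m f b = inr (exist _ b p).
Proof.
  unfold pon. destruct (excluded_middle_informative _) as [H|H].
  - exfalso. destruct H as [a Ha]. exact (p a Ha).
  - f_equal. f_equal. apply proof_irrelevance.
Qed.

Lemma SPO_cons {A B C : Type} (m : A -> B) (f : A -> C) : Inj m -> SPO m f (pon m f) inl.
Proof.
  intros Im. split; [apply pon_m; exact Im|split;[|split;[|split]]].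
  - intros x y H; injection H; auto.
  - intros [c|[b p]]; [left; eauto| right; exists b; apply pon_not].
  - intros b c H. destruct (classic (exists a, m a = b)) as [E|E]; [exact E|].
    rewrite (pon_not m f b (fun a Ea => E (ex_intro _ a Ea))) in H; discriminate.
  - intros b b' H Hn. rewrite (pon_not m f b Hn) in H.
    destruct (classic (exists a, m a = b')) as [[a Ea]|E].
    + subst b'. rewrite pon_m in H by exact Im. discriminate.
    + rewrite (pon_not m f b' (fun a Ea => E (ex_intro _ a Ea))) in H.
      apply (f_equal (fun z => match z with inl _ => b | inr s => proj1_sig s end)) in H. exact H.
Qed.

Lemma or_not_l {P Q : Prop} : P \/ Q -> ~ P -> Q.
Proof. tauto. Qed.

Definition po_med {B C D X : Type} (n : B -> D) (g : C -> D) (h : B -> X) (k : C -> X)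
  (H3 : forall d, (exists c, g c = d) \/ (exists b, n b = d)) (d : D) : X :=
  match excluded_middle_informative (exists c, g c = d) with
  | left H => k (proj1_sig (constructive_indefinite_description _ H))
  | right H => h (proj1_sig (constructive_indefinite_description _ (or_not_l (H3 d) H)))
  end.

Lemma po_med_g {A B C D X : Type} (m : A -> B) (f : A -> C) (n : B -> D) (g : C -> D)
  (h : B -> X) (k : C -> X) H3 :
  SPO m f n g -> (forall a, h (m a) = k (f a)) -> forall c, po_med n g h k H3 (g c) = k c.
Proof.
  intros [P1 [P2 [P3 [P4 P5]]]] Hhk c. unfold po_med.
  destruct (excluded_middle_informative _) as [H|H].
  - destruct (constructive_indefinite_description _ H) as [c' Hc']; simpl. f_equal. apply P2; auto.
  - exfalso; eauto.
Qed.

Lemma po_med_n {A B C D X : Type} (m : A -> B) (f : A -> C) (n : B -> D) (g : C -> D)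
  (h : B -> X) (k : C -> X) H3 :
  SPO m f n g -> (forall a, h (m a) = k (f a)) -> forall b, po_med n g h k H3 (n b) = h b.
Proof.
  intros [P1 [P2 [P3 [P4 P5]]]] Hhk b. unfold po_med.
  destruct (excluded_middle_informative _) as [H|H].
  - destruct (constructive_indefinite_description _ H) as [c Hc]; simpl.
    destruct (P4 b c (eq_sym Hc)) as [a Ha]. subst b.
    rewrite Hhk. f_equal. apply P2. rewrite <- P1. exact Hc.
  - destruct (constructive_indefinite_description _ _) as [b' Hb']; simpl. f_equal.
    destruct (classic (exists a, m a = b')) as [[a Ea]|Ne].
    + exfalso; apply H; exists (f a); rewrite <- P1, Ea; exact Hb'.
    + apply P5; auto. intros a Ea; apply Ne; eauto.
Qed.

Lemma F3map_comp {A A' A'' B B' B'' : Type} (f1 : A -> A') (f2 : B -> B') (g1 : A' -> A'') (g2 : B' -> B'') h1 h2 p :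
  (forall x, g1 (f1 x) = h1 x) -> (forall x, g2 (f2 x) = h2 x) ->
  F3map g1 g2 (F3map f1 f2 p) = F3map h1 h2 p.
Proof. intros E1 E2. destruct p as [[x|x] [y|y]]; unfold F3map, smap; simpl; rewrite ?E1, ?E2; reflexivity. Qed.

Lemma smap_jinj {PV PE BV BE CV CE : Type} (p1V : PV -> BV) (p1E : PE -> BE) (p2V : PV -> CV) (p2E : PE -> CE) :
  (forall x y, p1V x = p1V y -> p2V x = p2V y -> x = y) ->
  (forall x y, p1E x = p1E y -> p2E x = p2E y -> x = y) ->
  forall s s', smap p1V p1E s = smap p1V p1E s' -> smap p2V p2E s = smap p2V p2E s' -> s = s'.
Proof.
  intros JV JE s s' H1 H2.
  destruct s, s'; simpl in *; try discriminate;
  injection H1; injection H2; intros; f_equal; auto.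
Qed.

Lemma F3map_jinj {PV PE BV BE CV CE : Type} (p1V : PV -> BV) (p1E : PE -> BE) (p2V : PV -> CV) (p2E : PE -> CE) :
  (forall x y, p1V x = p1V y -> p2V x = p2V y -> x = y) ->
  (forall x y, p1E x = p1E y -> p2E x = p2E y -> x = y) ->
  forall q q', F3map p1V p1E q = F3map p1V p1E q' -> F3map p2V p2E q = F3map p2V p2E q' -> q = q'.
Proof.
  intros JV JE [s t] [s' t'] H1 H2. unfold F3map in *; simpl in *.
  injection H1 as H1a H1b. injection H2 as H2a H2b.
  f_equal; eapply smap_jinj; eauto.
Qed.

Definition CPB {P B C D : F3coalg} (p1 : F3hom P B) (p2 : F3hom P C) (f : F3hom B D) (g : F3hom C D) :=
  SPB (hV p1) (hV p2) (hV f) (hV g) /\ SPB (hE p1) (hE p2) (hE f) (hE g).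

Definition CPO {A B C D : F3coalg} (m : F3hom A B) (f : F3hom A C) (n : F3hom B D) (g : F3hom C D) :=
  SPO (hV m) (hV f) (hV n) (hV g) /\ SPO (hE m) (hE f) (hE n) (hE g).

Lemma CPB_pb {P B C D : F3coalg} {p1 : F3hom P B} {p2 : F3hom P C} {f : F3hom B D} {g : F3hom C D} :
  CPB p1 p2 f g -> @is_pullback F3Coalg P B C D p1 p2 f g.
Proof.
  intros [[V1 [V2 V3]] [E1 [E2 E3]]]. split.
  - split; simpl; auto.
  - intros X h k [HV HE]. simpl in HV, HE.
    pose (uV := fun x => proj1_sig (constructive_indefinite_description _ (V2 _ _ (HV x)))).
    pose (uE := fun x => proj1_sig (constructive_indefinite_description _ (E2 _ _ (HE x)))).
    assert (U1V : forall x, hV p1 (uV x) = hV h x /\ hV p2 (uV x) = hV k x).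
    { intro x. unfold uV. destruct (constructive_indefinite_description _ _) as [y Hy]; exact Hy. }
    assert (U1E : forall x, hE p1 (uE x) = hE h x /\ hE p2 (uE x) = hE k x).
    { intro x. unfold uE. destruct (constructive_indefinite_description _ _) as [y Hy]; exact Hy. }
    assert (Hc : forall e, cstr P (uE e) = F3map uV uE (cstr X e)).
    { intro e. apply (F3map_jinj _ _ _ _ V3 E3).
      - rewrite <- (hcomm p1 (uE e)), (proj1 (U1E e)), (hcomm h e). symmetry.
        apply F3map_comp; intro; apply U1V || apply U1E.
      - rewrite <- (hcomm p2 (uE e)), (proj2 (U1E e)), (hcomm k e). symmetry.
        apply F3map_comp; intro; apply U1V || apply U1E. }
    exists {| hV := uV; hE := uE; hcomm := Hc |}.
    split; [split; simpl; intro; apply U1V || apply U1E|].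
    split; [split; simpl; intro; apply U1V || apply U1E|].
    intros u' [A1 A2] [B1 B2]. simpl in *.
    split; simpl; intro x.
    + apply V3; rewrite ?A1, ?B1; symmetry; apply U1V.
    + apply E3; rewrite ?A2, ?B2; symmetry; apply U1E.
Qed.

Section PBcons.
Variables (B C D : F3coalg) (f : F3hom B D) (g : F3hom C D).
Definition PBV := {p : cV B * cV C | hV f (fst p) = hV g (snd p)}.
Definition PBE := {p : cE B * cE C | hE f (fst p) = hE g (snd p)}.
Definition comb (s : cV B + cE B) (t : cV C + cE C)
  (H : smap (hV f) (hE f) s = smap (hV g) (hE g) t) : PBV + PBE.
Proof.
  destruct s as [x|x], t as [y|y]; simpl in H.
  - left. exists (x,y). simpl. injection H; auto.
  - exfalso; discriminate H.
  - exfalso; discriminate H.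
  - right. exists (x,y). simpl. injection H; auto.
Defined.

Lemma comb_1 s t H : smap (fun p : PBV => fst (proj1_sig p)) (fun p : PBE => fst (proj1_sig p)) (comb s t H) = s.
Proof. revert H; destruct s, t; simpl; intro H; try discriminate; reflexivity. Qed.
Lemma comb_2 s t H : smap (fun p : PBV => snd (proj1_sig p)) (fun p : PBE => snd (proj1_sig p)) (comb s t H) = t.
Proof. revert H; destruct s, t; simpl; intro H; try discriminate; reflexivity. Qed.

Lemma pb_eq b c (H : hE f b = hE g c) :
  F3map (hV f) (hE f) (cstr B b) = F3map (hV g) (hE g) (cstr C c).
Proof. rewrite <- (hcomm f b), <- (hcomm g c), H. reflexivity. Qed.

Definition PBcstr (e : PBE) : (PBV + PBE) * (PBV + PBE) :=
  match e with exist _ p H =>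
    (comb (fst (cstr B (fst p))) (fst (cstr C (snd p))) (f_equal fst (pb_eq _ _ H)),
     comb (snd (cstr B (fst p))) (snd (cstr C (snd p))) (f_equal snd (pb_eq _ _ H)))
  end.

Definition PBob : F3coalg := {| cV := PBV; cE := PBE; cstr := PBcstr |}.

Definition pb1 : F3hom PBob B.
Proof.
  refine {| hV := fun p : cV PBob => fst (proj1_sig (p : PBV)); hE := fun p : cE PBob => fst (proj1_sig (p : PBE)); hcomm := _ |}.
  intros [[b c] H]. simpl. unfold F3map. cbn [fst snd]. rewrite !comb_1. destruct (cstr B b); reflexivity.
Defined.
Definition pb2 : F3hom PBob C.
Proof.
  refine {| hV := fun p : cV PBob => snd (proj1_sig (p : PBV)); hE := fun p : cE PBob => snd (proj1_sig (p : PBE)); hcomm := _ |}.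
  intros [[b c] H]. simpl. unfold F3map. cbn [fst snd]. rewrite !comb_2. destruct (cstr C c); reflexivity.
Defined.

Lemma PB_CPB : CPB pb1 pb2 f g.
Proof. split; apply SPB_sig. Qed.
End PBcons.
Arguments PBob {B C D} f g.
Arguments pb1 {B C D} f g.
Arguments pb2 {B C D} f g.
Arguments PB_CPB {B C D} f g.

Lemma pb_CPB (P B C D : F3coalg) (p1 : F3hom P B) (p2 : F3hom P C) (f : F3hom B D) (g : F3hom C D) :
  @is_pullback F3Coalg P B C D p1 p2 f g -> CPB p1 p2 f g.
Proof.
  intros [Hc Hu].
  pose proof (PB_CPB f g) as H0.
  pose proof (CPB_pb H0) as [Hc0 Hu0].
  destruct (Hu _ (pb1 f g) (pb2 f g) Hc0) as [u [[U1V U1E] [[U2V U2E] _]]].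
  destruct (Hu0 _ p1 p2 Hc) as [v [[V1V V1E] [[V2V V2E] _]]].
  destruct (Hu _ p1 p2 Hc) as [w [_ [_ W]]].
  simpl in *.
  destruct (W (F3comp u v)) as [UVV UVE]; [split; simpl; intro; rewrite ?U1V, ?U1E, ?V1V, ?V1E; reflexivity
    |split; simpl; intro; rewrite ?U2V, ?U2E, ?V2V, ?V2E; reflexivity|].
  destruct (W (F3id P)) as [IV IE]; [split; simpl; reflexivity|split; simpl; reflexivity|].
  simpl in *. destruct Hc as [HcV HcE]. destruct H0 as [H0V H0E].
  split.
  - eapply (SPB_transfer _ _ _ _ _ _ (hV u) (hV v) H0V); eauto.
    intro x. rewrite UVV, IV. reflexivity.
  - eapply (SPB_transfer _ _ _ _ _ _ (hE u) (hE v) H0E); eauto.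
    intro x. rewrite UVE, IE. reflexivity.
Qed.

Lemma CPO_po {A B C D : F3coalg} {m : F3hom A B} {f : F3hom A C} {n : F3hom B D} {g : F3hom C D} :
  CPO m f n g -> @is_pushout F3Coalg A B C D m f n g.
Proof.
  intros [SV SE].
  pose proof SV as [V1 [V2 [V3 [V4 V5]]]]. pose proof SE as [E1 [E2 [E3 [E4 E5]]]].
  split.
  - split; simpl; auto.
  - intros X h k [HV HE]. simpl in HV, HE.
    pose (uV := po_med (hV n) (hV g) (hV h) (hV k) V3).
    pose (uE := po_med (hE n) (hE g) (hE h) (hE k) E3).
    assert (UgV : forall c, uV (hV g c) = hV k c) by (apply (po_med_g _ _ _ _ _ _ _ SV HV)).
    assert (UnV : forall b, uV (hV n b) = hV h b) by (apply (po_med_n _ _ _ _ _ _ _ SV HV)).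
    assert (UgE : forall c, uE (hE g c) = hE k c) by (apply (po_med_g _ _ _ _ _ _ _ SE HE)).
    assert (UnE : forall b, uE (hE n b) = hE h b) by (apply (po_med_n _ _ _ _ _ _ _ SE HE)).
    assert (Hc : forall e, cstr X (uE e) = F3map uV uE (cstr D e)).
    { intro e. destruct (E3 e) as [[c Hc]|[b Hb]]; subst e.
      - rewrite UgE, (hcomm k c), (hcomm g c). symmetry. apply F3map_comp; auto.
      - rewrite UnE, (hcomm h b), (hcomm n b). symmetry. apply F3map_comp; auto. }
    exists {| hV := uV; hE := uE; hcomm := Hc |}.
    split; [split; simpl; auto|]. split; [split; simpl; auto|].
    intros u' [A1 A2] [B1 B2]. simpl in *. split; simpl.
    + intro d. destruct (V3 d) as [[c Hc']|[b Hb]]; subst d; rewrite ?B1, ?UgV, ?A1, ?UnV; reflexivity.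
    + intro d. destruct (E3 d) as [[c Hc']|[b Hb]]; subst d; rewrite ?B2, ?UgE, ?A2, ?UnE; reflexivity.
Qed.

Section POcons.
Variables (A B C : F3coalg) (m : F3hom A B) (f : F3hom A C).
Hypotheses (mVi : Inj (hV m)) (mEi : Inj (hE m)).
Definition POV := (cV C + {b : cV B | forall a, hV m a <> b})%type.
Definition POE := (cE C + {b : cE B | forall a, hE m a <> b})%type.
Definition POcstr (x : POE) : (POV + POE) * (POV + POE) :=
  match x with
  | inl c => F3map inl inl (cstr C c)
  | inr s => F3map (pon (hV m) (hV f)) (pon (hE m) (hE f)) (cstr B (proj1_sig s))
  end.
Definition POob : F3coalg := {| cV := POV; cE := POE; cstr := POcstr |}.

Definition po_n : F3hom B POob.
Proof.
  refine {| hV := pon (hV m) (hV f) : cV B -> cV POob; hE := pon (hE m) (hE f) : cE B -> cE POob; hcomm := _ |}.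
  intro e. destruct (classic (exists a, hE m a = e)) as [[a Ea]|E].
  - subst e. simpl. rewrite (pon_m _ _ mEi). simpl.
    rewrite (hcomm f a), (hcomm m a).
    rewrite (F3map_comp (hV f) (hE f) inl inl (fun x => inl (hV f x)) (fun x => inl (hE f x))) by reflexivity.
    symmetry. apply F3map_comp; intro; apply pon_m; assumption.
  - simpl. rewrite (pon_not _ _ e (fun a Ea => E (ex_intro _ a Ea))). reflexivity.
Defined.

Definition po_g : F3hom C POob.
Proof.
  refine {| hV := inl : cV C -> cV POob; hE := inl : cE C -> cE POob; hcomm := _ |}.
  intro e; reflexivity.
Defined.

Lemma PO_CPO : CPO m f po_n po_g.
Proof. split; apply SPO_cons; assumption. Qed.
End POcons.
Arguments POob {A B C} m f.
Arguments po_n {A B C} m f mVi mEi.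
Arguments po_g {A B C} m f.
Arguments PO_CPO {A B C} m f mVi mEi.

Lemma po_CPO {A B C D : F3coalg} {m : F3hom A B} {f : F3hom A C} {n : F3hom B D} {g : F3hom C D} :
  Inj (hV m) -> Inj (hE m) -> @is_pushout F3Coalg A B C D m f n g -> CPO m f n g.
Proof.
  intros mV mE [Hc Hu].
  pose proof (PO_CPO m f mV mE) as H0.
  pose proof (CPO_po H0) as [Hc0 Hu0].
  destruct (Hu _ (po_n m f mV mE) (po_g m f) Hc0) as [u [[U1V U1E] [[U2V U2E] _]]].
  destruct (Hu0 _ n g Hc) as [v [[V1V V1E] [[V2V V2E] _]]].
  destruct (Hu _ n g Hc) as [w [_ [_ W]]].
  simpl in *.
  destruct (W (F3comp v u)) as [UVV UVE]; [split; simpl; intro; rewrite ?U1V, ?U1E, ?V1V, ?V1E; reflexivity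
    |split; simpl; intro; rewrite ?U2V, ?U2E, ?V2V, ?V2E; reflexivity|].
  destruct (W (F3id D)) as [IV IE]; [split; simpl; reflexivity|split; simpl; reflexivity|].
  simpl in *. destruct Hc as [HcV HcE]. destruct H0 as [H0V H0E].
  split.
  - eapply (SPO_transfer _ _ _ _ _ _ (hV u) (hV v) H0V); eauto.
    intro x. rewrite UVV, IV. reflexivity.
  - eapply (SPO_transfer _ _ _ _ _ _ (hE u) (hE v) H0E); eauto.
    intro x. rewrite UVE, IE. reflexivity.
Qed.

Theorem mainTheorem10 : M_adhesive M_inj.
Proof.
  split; [|split; [|split; [|split; [|split; [|split; [|split]]]]]].
  - intros A B m [Hv He] X g h [E1 E2]. simpl in E1, E2. split; intros; auto.
  - intros A; split; intros x y H; exact H.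
  - intros A B D f g [f1 f2] [g1 g2]; split; intros x y H; simpl in H; auto.
  - intros A B C' m f [Hv He]. exists (POob m f), (po_n m f Hv He), (po_g m f).
    apply CPO_po. apply PO_CPO.
  - intros A B C' D m f n g [Hv He] Hpo.
    destruct (po_CPO Hv He Hpo) as [[_ [G1 _]] [_ [G2 _]]]. split; auto.
  - intros B C' D f g _. exists (PBob f g), (pb1 f g), (pb2 f g). apply CPB_pb. apply PB_CPB.
  - intros P B C' D p1 p2 f g [Gv Ge] Hpb.
    destruct (pb_CPB _ _ _ _ _ _ _ _ Hpb) as [[V1 [_ V3]] [E1 [_ E3]]].
    split; intros x y H; [apply V3|apply E3]; auto.
    + apply Gv. rewrite <- V1, <- V1, H; reflexivity.
    + apply Ge. rewrite <- E1, <- E1, H; reflexivity.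
  - intros A B C' D m f n g Hm Hpo A' B' C'' D' m' f' n' g' a b c d
      Htop Ha Hb Hc Hd Hbm Hbf Hfr Hfl.
    destruct Hm as [mV mE]. destruct (po_CPO mV mE Hpo) as [SV SE].
    destruct (pb_CPB _ _ _ _ _ _ _ _ Hbm) as [[BmV1 [BmV2 _]] [BmE1 [BmE2 _]]].
    destruct (pb_CPB _ _ _ _ _ _ _ _ Hbf) as [[BfV1 [BfV2 _]] [BfE1 [BfE2 _]]].
    destruct Htop as [T1 T2]; destruct Hfr as [FR1 FR2]; destruct Hfl as [FL1 FL2].
    simpl in *.
    destruct Ha as [aV aE]; destruct Hb as [bV bE]; destruct Hc as [cV' cE']; destruct Hd as [dV dE].
    pose proof (set_VK _ _ _ _ _ _ _ _ _ _ _ _ SV bV cV' dV T1 BmV1 BmV2 BfV1 BfV2 FR1 FL1) as KV.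
    pose proof (set_VK _ _ _ _ _ _ _ _ _ _ _ _ SE bE cE' dE T2 BmE1 BmE2 BfE1 BfE2 FR2 FL2) as KE.
    split.
    + intros Hpo'.
      assert (m'V : Inj (hV m')).
      { intros x y H. apply aV, mV. rewrite !BmV1, H. reflexivity. }
      assert (m'E : Inj (hE m')).
      { intros x y H. apply aE, mE. rewrite !BmE1, H. reflexivity. }
      destruct (po_CPO m'V m'E Hpo') as [TV TE].
      apply KV in TV; apply KE in TE.
      split; apply CPB_pb; split; tauto.
    + intros [H1 H2]. apply pb_CPB in H1. apply pb_CPB in H2.
      destruct H1, H2.
      apply CPO_po. split; [apply KV | apply KE]; split; assumption.
Qed.
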